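(* Let $q=2^m$ with $m\ge 2$, and let $k$ be an integer with $1\le k\le q+1$ such that $\mathrm{Tr}_{q^2/q}(\mathcal C_{\{3,5\}})$ contains a codeword of weight $k$. Then $\mathcal B_k(\mathrm{Tr}_{q^2/q}(\mathcal C_{\{3,5\}}))$ is invariant under the action of $\mathrm{Stab}_{U_{q+1}}$, i.e. $\pi(B)\in \mathcal B_k(\mathrm{Tr}_{q^2/q}(\mathcal C_{\{3,5\}}))$ for every block $B$ in it and every $\pi\in\mathrm{Stab}_{U_{q+1}}$. In particular, if $k>3$, the incidence structure $(U_{q+1},\mathcal B_k(\mathrm{Tr}_{q^2/q}(\mathcal C_{\{3,5\}})))$ is a $3$-design.
   Context: $U_{q+1}$ is the set of $(q+1)$-th roots of unity in $\mathrm{GF}(q^2)$, viewed as a subset of the projective line $\mathrm{PG}(1,q^2)=\mathrm{GF}(q^2)\cup\{\infty\}$; coordinates are indexed by $U_{q+1}$. $\mathrm{Stab}_{U_{q+1}}$ is the setwise stabilizer of $U_{q+1}$ in $\mathrm{PGL}_2(\mathrm{GF}(q^2))$ acting on $\mathrm{PG}(1,q^2)$ by linear fractional transformations $x\mapsto\frac{ax+b}{cx+d}$. $\mathcal C_{\{3,5\}}=\{(a_3u^3+a_{q-2}u^{q-2}+a_5u^5+a_{q-4}u^{q-4})_{u\in U_{q+1}}: a_i\in\mathrm{GF}(q^2)\}$; $\mathrm{Tr}_{q^2/q}(\mathcal C)$ is obtained by applying $\mathrm{Tr}_{q^2/q}(x)=x+x^q$ coordinatewise to all codewords. For a code $\mathcal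 C$, $\mathcal B_k(\mathcal C)$ is the set of supports $\{u: c_u\neq0\}$ of the codewords of Hamming weight $k$. A $3$-design is a pair (point set, set of $k$-subsets called blocks) such that every $3$ points lie in the same positive number $\lambda$ of blocks. *)

(* Defs.v *)
From mathcomp Require Import all_boot all_order all_algebra all_field.
Set Implicit Arguments. Unset Strict Implicit. Unset Printing Implicit Defensive.
Import GRing.Theory.
Local Open Scope ring_scope.

(* F plays the role of GF(q^2); q is given explicitly. *)

Definition Uroots (F : finFieldType) (q : nat) : {set F} :=
  [set u : F | u ^+ q.+1 == 1].

Definition trq (F : finFieldType) (q : nat) (x : F) : F := x + x ^+ q.

(* Coordinate u of the codeword of Tr(C_{3,5}) given by coefficients
   a = (a_3, a_{q-2}, a_5, a_{q-4}). *)
Definition cw35 (F : finFieldType) (q : nat) (a : F * F * F * F) (u : F) : F :=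
  let: (a3, aq2, a5, aq4) := a in
  trq q (a3 * u ^+ 3 + aq2 * u ^+ (q - 2) + a5 * u ^+ 5 + aq4 * u ^+ (q - 4)).

Definition supp35 (F : finFieldType) (q : nat) (a : F * F * F * F) : {set F} :=
  [set u in Uroots F q | cw35 q a u != 0].

Definition blocks35 (F : finFieldType) (q k : nat) : {set {set F}} :=
  [set B : {set F} | (#|B| == k) && [exists a : F * F * F * F, B == supp35 q a]].

(* pi : x |-> (a x + b)/(c x + d) in PGL_2(F) lies in the setwise stabilizer of
   U_{q+1} (subset of PG(1,F) not containing infinity): pi is nondegenerate and
   maps every point of U to a finite point of U.  Since pi is a bijection of the
   projective line and U is finite, pi(U) <= U is equivalent to pi(U) = U. *)
Definition in_stabU (F : finFieldType) (q : nat) (a b c d : F) : Prop :=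
  a * d - b * c != 0 /\
  forall u, u \in Uroots F q -> c * u + d != 0 /\ (a * u + b) / (c * u + d) \in Uroots F q.

Definition mobius_img (F : finFieldType) (a b c d : F) (B : {set F}) : {set F} :=
  [set (a * u + b) / (c * u + d) | u in B].

Definition is_3design (F : finFieldType) (P : {set F}) (Bs : {set {set F}}) : Prop :=
  (forall B, B \in Bs -> B \subset P) /\
  exists lam : nat, (0 < lam)%N /\
    forall T : {set F}, T \subset P -> #|T| = 3 ->
      #|[set B in Bs | T \subset B]| = lam.

(* Main.v *)
Require Import Defs.
From mathcomp Require Import all_boot all_order all_algebra all_field.
From mathcomp Require cyclic.
From mathcomp Require Import ring zify.
Import GRing.Theory.
Local Open Scope ring_scope.

Definition good (F : finFieldType) (q : nat) : Prop :=
  [/\ 2 \in [pchar F], (4 <= q)%N, (forall x y : F, (x + y) ^+ q = x ^+ q + y ^+ q)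
    & forall x : F, (x ^+ q) ^+ q = x].

Lemma Ufacts {F : finFieldType} {q} (G : good F q) {u : F} :
  u \in Uroots F q -> u != 0 /\ u ^+ q = u^-1.
Proof.
case: G => _ hq _ _; rewrite inE => /eqP h.
have u0 : u != 0.
  by apply/eqP => u0; move: h; rewrite u0 expr0n /= => /eqP; rewrite eq_sym oner_eq0.
split=> //; apply: (mulfI u0); rewrite divff // -exprS; exact: h.
Qed.

Lemma Uexp {F : finFieldType} {q} (G : good F q) (u : F) k :
  u \in Uroots F q -> (k <= q.+1)%N -> u ^+ (q.+1 - k) = u ^- k.
Proof.
move=> uU hk; have [u0 uq] := Ufacts G uU.
move: uU; rewrite inE => /eqP h.
apply: (mulIf (expf_neq0 k u0)); rewrite -exprD subnK // h mulVf //.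
exact: expf_neq0.
Qed.

Lemma cwU {F : finFieldType} {q} (G : good F q) a3 a2 a5 a4 (u : F) :
  u \in Uroots F q ->
  cw35 q (a3, a2, a5, a4) u =
  (a3 + a2 ^+ q) * u ^+ 3 + (a5 + a4 ^+ q) * u ^+ 5
  + (a3 + a2 ^+ q) ^+ q * u ^- 3 + (a5 + a4 ^+ q) ^+ q * u ^- 5.
Proof.
move=> uU; have [u0 uq] := Ufacts G uU.
case: (G) => ch2 hq HD HQ.
have e2 : u ^+ (q - 2) = u ^- 3.
  have -> : (q - 2 = q.+1 - 3)%N by lia.
  by rewrite Uexp //; lia.
have e4 : u ^+ (q - 4) = u ^- 5.
  have -> : (q - 4 = q.+1 - 5)%N by lia.
  by rewrite Uexp //; lia.
have hp k a : (a * u ^+ k) ^+ q = a ^+ q * u ^- k.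
  by rewrite exprMn -exprM mulnC exprM uq exprVn.
have hm k a : (a * u ^- k) ^+ q = a ^+ q * u ^+ k.
  by rewrite exprMn exprVn -exprM mulnC exprM uq exprVn invrK.
rewrite /cw35 /trq e2 e4 !HD !hp !hm !HQ.
ring.
Qed.

Lemma frobn {F : finFieldType} (ch2 : 2 \in [pchar F]) (n : nat) (x y : F) :
  (x + y) ^+ (2 ^ n) = x ^+ (2 ^ n) + y ^+ (2 ^ n).
Proof.
apply: exprDn_pchar; rewrite (eq_pnat _ (pcharf_eq ch2)).
by rewrite pnatX pnat_id.
Qed.

Lemma trq_fix {F : finFieldType} {q} (G : good F q) (x : F) : (trq q x) ^+ q = trq q x.
Proof. by case: G => _ _ HD HQ; rewrite /trq HD HQ addrC. Qed.

Lemma good_of (F : finFieldType) (m : nat) : (2 <= m)%N -> #|F| = ((2 ^ m) ^ 2)%N ->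
  good F (2 ^ m).
Proof.
move=> hm hF.
have ch2 : 2 \in [pchar F].
  by apply: (@card_finPcharP F 2 (m * 2)) => //; rewrite expnM.
split=> //.
- by rewrite -[4%N]/(2 ^ 2)%N leq_exp2l.
- move=> x y; apply: exprDn_pchar; rewrite (eq_pnat _ (pcharf_eq ch2)).
  by rewrite pnatX pnat_id.
- by move=> x; rewrite -exprM mulnn -hF expf_card.
Qed.

Lemma three_pts {F : finFieldType} {q} (G : good F q) : #|F| = (q ^ 2)%N ->
  exists x1 x2 x3 : F, [/\ x1 \in Uroots F q, x2 \in Uroots F q & x3 \in Uroots F q] /\
     [/\ x1 != x2, x1 != x3 & x2 != x3].
Proof.
move=> hF; case: (G) => ch2 hq HD HQ.
pose n := #|F|.-1.
pose rs := enum [pred x : F | x != 0].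
have n_gt0 : (0 < n)%N by rewrite /n hF; nia.
have : has n.-primitive_root rs.
  apply: cyclic.has_prim_root => //.
  - apply/allP => x; rewrite mem_enum inE => x0.
    rewrite unity_rootE; apply/eqP; apply: (mulIf x0).
    by rewrite mul1r -exprSr /n prednK ?expf_card //; apply: ltnW (finNzRing_gt1 F).
  - exact: enum_uniq.
  - by rewrite -cardE cardC1.
case/hasP => z _ zp.
have zn : z ^+ n = 1 := prim_expr_order zp.
have inU k : z ^+ (k * q.-1) \in Uroots F q.
  rewrite inE -exprM -mulnA mulnC exprM.
  have -> : (q.-1 * q.+1 = n)%N by rewrite /n hF; nia.
  by rewrite zn expr1n.
have ne i j : (i < n)%N -> (j < n)%N -> i != j -> z ^+ i != z ^+ j.
  by move=> hi hj hij; rewrite (eq_prim_root_expr zp) !modn_small.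
exists (z ^+ (0 * q.-1)), (z ^+ (1 * q.-1)), (z ^+ (2 * q.-1)); split; split => //;
  apply: ne; rewrite /n ?hF; nia.
Qed.

Lemma quad0 {F : fieldType} {e1 e2 e3 x1 x2 x3 : F} :
  x1 != x2 -> x1 != x3 -> x2 != x3 ->
  e1 * x1 ^+ 2 + e2 * x1 + e3 = 0 ->
  e1 * x2 ^+ 2 + e2 * x2 + e3 = 0 ->
  e1 * x3 ^+ 2 + e2 * x3 + e3 = 0 -> [/\ e1 = 0, e2 = 0 & e3 = 0].
Proof.
move=> n12 n13 n23 h1 h2 h3.
have d12 : (x1 - x2) * (e1 * (x1 + x2) + e2) = 0.
  by rewrite -[RHS](subrr 0) -{1}h1 -h2; ring.
have d13 : (x1 - x3) * (e1 * (x1 + x3) + e2) = 0.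
  by rewrite -[RHS](subrr 0) -{1}h1 -h3; ring.
move/eqP: d12; rewrite mulf_eq0 subr_eq0 (negbTE n12) /= => /eqP d12.
move/eqP: d13; rewrite mulf_eq0 subr_eq0 (negbTE n13) /= => /eqP d13.
have : e1 * (x2 - x3) = 0 by rewrite -[RHS](subrr 0) -{1}d12 -d13; ring.
move/eqP; rewrite mulf_eq0 subr_eq0 (negbTE n23) orbF => /eqP e10.
move: d12; rewrite e10 mul0r add0r => e20.
by move: h1; rewrite e10 e20 !mul0r !add0r.
Qed.

Lemma frobB {F : finFieldType} {q} (G : good F q) (x y : F) :
  (x - y) ^+ q = x ^+ q - y ^+ q.
Proof.
case: G => ch2 _ HD _.
by rewrite !(oppr_pchar2 ch2) HD.
Qed.

Lemma stab_ids {F : finFieldType} {q} (G : good F q) {x1 x2 x3 : F}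
  (hx : [/\ x1 \in Uroots F q, x2 \in Uroots F q & x3 \in Uroots F q])
  (hd : [/\ x1 != x2, x1 != x3 & x2 != x3]) {a b c d : F} :
  in_stabU q a b c d ->
  [/\ a * b ^+ q = c * d ^+ q,
      a * a ^+ q + b * b ^+ q = c * c ^+ q + d * d ^+ q &
      a ^+ q * b = c ^+ q * d].
Proof.
case=> det hu.
have key u : u \in Uroots F q ->
    (a * b ^+ q - c * d ^+ q) * u ^+ 2
    + (a * a ^+ q + b * b ^+ q - c * c ^+ q - d * d ^+ q) * u
    + (a ^+ q * b - c ^+ q * d) = 0.
  move=> uU; have [u0 uq] := Ufacts G uU.
  have [D0 vU] := hu u uU.
  have [v0 vq] := Ufacts G vU.
  have N0 : a * u + b != 0.
    by apply: contraNneq v0 => ->; rewrite mul0r.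
  have e : (a * u + b) ^+ q * (a * u + b) = (c * u + d) ^+ q * (c * u + d).
    move: vU; rewrite inE exprS exprMn exprVn => /eqP h.
    have : (a * u + b) * (a * u + b) ^+ q = (c * u + d) * (c * u + d) ^+ q.
      move/(congr1 (fun t => t * ((c * u + d) * (c * u + d) ^+ q))): h.
      rewrite mul1r => <-; field.
      by rewrite D0 expf_neq0.
    by rewrite mulrC => ->; rewrite mulrC.
  case: (G) => ch2 _ HD _.
  move: e; rewrite !HD !exprMn uq => e.
  have : u * ((a ^+ q * u^-1 + b ^+ q) * (a * u + b)) = u * ((c ^+ q * u^-1 + d ^+ q) * (c * u + d)) by rewrite e.
  move=> e'; rewrite -[RHS](subrr (u * ((c ^+ q * u^-1 + d ^+ q) * (c * u + d)))).
  rewrite -{1}e'; field.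
  exact: u0.
case: hx => h1 h2 h3; case: hd => n12 n13 n23.
have [E1 E2 E3] := quad0 n12 n13 n23 (key _ h1) (key _ h2) (key _ h3).
split.
- by apply/eqP; rewrite -subr_eq0 E1.
- by apply/eqP; rewrite -subr_eq0 -E2; apply/eqP; ring.
- by apply/eqP; rewrite -subr_eq0 E3.
Qed.

Lemma sfix {F : finFieldType} {q} (G : good F q) (a b c d u : F) :
  a * d - b * c != 0 ->
  [/\ a * b ^+ q = c * d ^+ q,
      a * a ^+ q + b * b ^+ q = c * c ^+ q + d * d ^+ q &
      a ^+ q * b = c ^+ q * d] ->
  u \in Uroots F q ->
  ((a * u + b) * (c * u + d) / (u * (a * d - b * c))) ^+ q
  = (a * u + b) * (c * u + d) / (u * (a * d - b * c)).
Proof.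
move=> det [E1 E2 E3] uU.
have [u0 uq] := Ufacts G uU.
case: (G) => ch2 _ HD _.
set A := a ^+ q; set B := b ^+ q; set C := c ^+ q; set Dq := d ^+ q.
have dq : (a * d - b * c) ^+ q = A * Dq - B * C by rewrite frobB // !exprMn.
have dq0 : A * Dq - B * C != 0 by rewrite -dq expf_neq0.
have key : (A + B * u) * (C + Dq * u) * (a * d - b * c) =
           (a * u + b) * (c * u + d) * (A * Dq - B * C).
  apply/eqP; rewrite -subr_eq0; apply/eqP.
  have -> : (A + B * u) * (C + Dq * u) * (a * d - b * c) -
      (a * u + b) * (c * u + d) * (A * Dq - B * C) =
      u ^+ 2 * ((a * B - c * Dq) * (d * Dq + c * C) - c * Dq * (a * A + b * B - c * C - d * Dq))
      + u * 2%:R * ((a * B - c * Dq) * C * d - c * Dq * (A * b - C * d))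
      + (d * C * (a * A + b * B - c * C - d * Dq) - (A * b - C * d) * (c * C + d * Dq)).
    ring.
  have z1 : a * B - c * Dq = 0 by rewrite /B /Dq E1 subrr.
  have z2 : a * A + b * B - c * C - d * Dq = 0 by rewrite /A /B /C /Dq E2; ring.
  have z3 : A * b - C * d = 0 by rewrite /A /C E3 subrr.
  rewrite z1 z2 z3; ring.
rewrite exprMn exprVn exprMn exprMn dq !HD !exprMn uq.
apply/eqP; rewrite -subr_eq0; apply/eqP.
have -> : (A * u^-1 + B) * (C * u^-1 + Dq) / (u^-1 * (A * Dq - B * C)) -
   (a * u + b) * (c * u + d) / (u * (a * d - b * c)) =
   ((A + B * u) * (C + Dq * u) * (a * d - b * c) -
           (a * u + b) * (c * u + d) * (A * Dq - B * C)) / (u * (a * d - b * c) * (A * Dq - B * C)).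
  by field; rewrite u0 det dq0.
by rewrite key subrr mul0r.
Qed.

Lemma alpha_ex {F : finFieldType} {q} (G : good F q) (x : F) :
  x \in Uroots F q -> x != 1 -> x + x ^+ q != 0.
Proof.
move=> xU x1; have [x0 xq] := Ufacts G xU.
case: (G) => ch2 _ _ _.
rewrite xq; apply/negP => /eqP h.
have h2 : (x + 1) ^+ (2 ^ 1) = 0.
  rewrite frobn // expn1 expr1n.
  have -> : x ^+ 2 + 1 = x * (x + x^-1) by rewrite mulrDr -expr2 divff.
  by rewrite h mulr0.
move/eqP: h2; rewrite expf_eq0 /= => /eqP h3.
move: x1; have -> : x = - 1 by apply/eqP; rewrite -addr_eq0 h3.
by rewrite (oppr_pchar2 ch2) eqxx.
Qed.

Lemma transform {F : finFieldType} {q} (G : good F q) (hF : #|F| = (q ^ 2)%N)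
  (a b c d : F) : in_stabU q a b c d -> forall a' : F * F * F * F,
  exists a'' : F * F * F * F, forall u, u \in Uroots F q ->
    (cw35 q a'' u == 0) = (cw35 q a' ((a * u + b) / (c * u + d)) == 0).
Proof.
move=> hS [[[a3 a2] a5] a4].
have [x1 [x2 [x3 [hx hd]]]] := three_pts G hF.
have ids := stab_ids G hx hd hS.
have [al al0] : exists al : F, al + al ^+ q != 0.
  case: hx => h1 h2 h3; case: hd => n12 _ _.
  have [e1|ne1] := eqVneq x1 1.
    by exists x2; apply: alpha_ex => //; rewrite -e1 eq_sym.
  by exists x1; apply: alpha_ex.
case: (hS) => det hu.
case: (G) => ch2 hq HD HQ.
set B3 := a3 + a2 ^+ q; set B5 := a5 + a4 ^+ q.
set B3q := B3 ^+ q; set B5q := B5 ^+ q.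
set dl := a * d - b * c.
pose f10 := B5 * a^+10 + B3 * a^+8 * c^+2 + B3q * a^+2 * c^+8 + B5q * c^+10.
pose f8 := B5 * a^+8 * b^+2 + B3 * a^+8 * d^+2 + B3q * b^+2 * c^+8 + B5q * c^+8 * d^+2.
pose f2 := B5 * a^+2 * b^+8 + B3 * b^+8 * c^+2 + B3q * a^+2 * d^+8 + B5q * c^+2 * d^+8.
pose f0 := B5 * b^+10 + B3 * b^+8 * d^+2 + B3q * b^+2 * d^+8 + B5q * d^+10.
pose k := al / dl ^+ 5.
exists (k * f8, k * f2, k * f10, k * f0) => u uU.
have [u0 uq] := Ufacts G uU.
have [D0 vU] := hu u uU.
have [v0 _] := Ufacts G vU.
set N := a * u + b; set D := c * u + d.
rewrite -/N -/D in D0 vU v0.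
have N0 : N != 0 by apply/eqP => hN; move: v0; rewrite hN mul0r eqxx.
have cwv := cwU G a3 a2 a5 a4 (N / D) vU.
rewrite -/B3 -/B5 -/B3q -/B5q in cwv.
pose Gu := (N * D / (u * dl)) ^+ 5 * cw35 q (a3, a2, a5, a4) (N / D).
have EN : B5 * N^+10 + B3 * N^+8 * D^+2 + B3q * N^+2 * D^+8 + B5q * D^+10 =
    f10 * u^+10 + f8 * u^+8 + f2 * u^+2 + f0.
  have n2 : N ^+ 2 = (a * u) ^+ 2 + b ^+ 2 := frobn ch2 1 _ _.
  have n8 : N ^+ 8 = (a * u) ^+ 8 + b ^+ 8 := frobn ch2 3 _ _.
  have d2 : D ^+ 2 = (c * u) ^+ 2 + d ^+ 2 := frobn ch2 1 _ _.
  have d8 : D ^+ 8 = (c * u) ^+ 8 + d ^+ 8 := frobn ch2 3 _ _.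
  have -> : N ^+ 10 = N ^+ 8 * N ^+ 2 by rewrite -exprD.
  have -> : D ^+ 10 = D ^+ 8 * D ^+ 2 by rewrite -exprD.
  rewrite n2 n8 d2 d8 /f10 /f8 /f2 /f0; ring.
have dl0 : dl != 0 := det.
have claim1 : Gu = dl ^- 5 * (f8 * u ^+ 3 + f2 * u ^- 3 + f10 * u ^+ 5 + f0 * u ^- 5).
  rewrite /Gu cwv.
  have -> : (N * D / (u * dl)) ^+ 5 * (B3 * (N / D) ^+ 3 + B5 * (N / D) ^+ 5 +
     B3q * (N / D) ^- 3 + B5q * (N / D) ^- 5) =
     (B5 * N^+10 + B3 * N^+8 * D^+2 + B3q * N^+2 * D^+8 + B5q * D^+10) / (u ^+ 5 * dl ^+ 5).
    by field; rewrite u0 dl0 N0 D0.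
  rewrite EN; field; by rewrite u0 dl0.
have claim2 : Gu ^+ q = Gu.
  rewrite /Gu exprMn exprAC sfix // /cw35 trq_fix //.
have e3 : u ^+ (q - 2) = u ^- 3.
  have -> : (q - 2 = q.+1 - 3)%N by lia.
  by rewrite (Uexp G) //; lia.
have e5 : u ^+ (q - 4) = u ^- 5.
  have -> : (q - 4 = q.+1 - 5)%N by lia.
  by rewrite (Uexp G) //; lia.
have inner : k * f8 * u ^+ 3 + k * f2 * u ^+ (q - 2) + k * f10 * u ^+ 5 + k * f0 * u ^+ (q - 4)
    = al * Gu.
  by rewrite claim1 e3 e5 /k; field; rewrite u0 dl0.
rewrite /cw35 inner /trq exprMn claim2 -mulrDl mulf_eq0 (negbTE al0) /=.
rewrite /Gu mulf_eq0 expf_eq0 /= !mulf_eq0 !invr_eq0 !mulf_eq0 (negbTE N0) (negbTE D0).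
by rewrite (negbTE u0) (negbTE dl0).
Qed.

Lemma L_img {T : finType} {f : T -> T} {U : {set T}} :
  {in U &, injective f} -> (forall u, u \in U -> f u \in U) -> f @: U = U.
Proof.
move=> finj fU; apply/eqP; rewrite eqEcard card_in_imset // leqnn andbT.
by apply/subsetP => y /imsetP [x xU ->]; exact: fU.
Qed.

Lemma L_pre {T : finType} {f : T -> T} {U B : {set T}} :
  {in U &, injective f} -> (forall u, u \in U -> f u \in U) -> B \subset U ->
  f @: [set u in U | f u \in B] = B.
Proof.
move=> finj fU sB; apply/setP => y; apply/imsetP/idP.
  by case=> x; rewrite in_set => /andP [_ h] ->.
move=> yB; have : y \in f @: U by rewrite L_img // (subsetP sB).
by case/imsetP => x xU e; exists x => //; rewrite in_set xU -e yB.
Qed.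

Lemma L_card {T : finType} {f : T -> T} {U B : {set T}} :
  {in U &, injective f} -> (forall u, u \in U -> f u \in U) -> B \subset U ->
  #|[set u in U | f u \in B]| = #|B|.
Proof.
move=> finj fU sB; rewrite -{2}(L_pre finj fU sB) card_in_imset //.
by apply: sub_in2 finj => x; rewrite in_set => /andP [].
Qed.

Lemma L_preimg {T : finType} {f : T -> T} {U B : {set T}} :
  {in U &, injective f} -> B \subset U ->
  [set u in U | f u \in f @: B] = B.
Proof.
move=> finj sB; apply/setP => u; rewrite in_set.
apply/andP/idP.
  case=> uU /imsetP [v vB e]; rewrite (finj _ _ uU (subsetP sB _ vB) e) //.
by move=> uB; split; [exact: (subsetP sB) | exact: imset_f].
Qed.

Lemma L_imginj {T : finType} {f : T -> T} {U B1 B2 : {set T}} :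
  {in U &, injective f} -> B1 \subset U -> B2 \subset U -> f @: B1 = f @: B2 -> B1 = B2.
Proof.
move=> finj s1 s2 e.
by rewrite -(L_preimg finj s1) -(L_preimg finj s2) e.
Qed.

Lemma sub3 {T : finType} (B : {set T}) : (3 <= #|B|)%N ->
  exists T0 : {set T}, T0 \subset B /\ #|T0| = 3%N.
Proof.
move=> h; exists [set x in take 3 (enum B)]; split.
  apply/subsetP => x; rewrite in_set => /mem_take; by rewrite mem_enum.
rewrite cardsE; have /card_uniqP -> : uniq (take 3 (enum B)).
  by apply: take_uniq; exact: enum_uniq.
by rewrite size_take -cardE; case: ifP => // /negbT hn; lia.
Qed.

Lemma three_elems {T : finType} (A : {set T}) : #|A| = 3%N ->
  exists x1 x2 x3, A = [set x1; x2; x3] /\ [/\ x1 != x2, x1 != x3 & x2 != x3].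
Proof.
move=> h; have hs : size (enum A) = 3%N by rewrite -cardE.
have u := enum_uniq (mem A).
case e: (enum A) hs u => [|x1 [|x2 [|x3 [|]]]] // _ u.
exists x1, x2, x3; split.
  apply/setP => x; rewrite -mem_enum e !inE.
  by rewrite orbA.
move: u; rewrite /= !inE !negb_or => /and3P [/andP [n12 n13] n23 _].
by split.
Qed.

Lemma mob3 {F : finFieldType} {q} (G : good F q) (x1 x2 x3 y1 y2 y3 : F) :
  [/\ x1 \in Uroots F q, x2 \in Uroots F q & x3 \in Uroots F q] ->
  [/\ x1 != x2, x1 != x3 & x2 != x3] ->
  [/\ y1 \in Uroots F q, y2 \in Uroots F q & y3 \in Uroots F q] ->
  [/\ y1 != y2, y1 != y3 & y2 != y3] ->
  exists a b c d : F, in_stabU q a b c d /\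
    [/\ (a * x1 + b) / (c * x1 + d) = y1, (a * x2 + b) / (c * x2 + d) = y2
      & (a * x3 + b) / (c * x3 + d) = y3].
Proof.
move=> [hx1 hx2 hx3] [nx12 nx13 nx23] [hy1 hy2 hy3] [ny12 ny13 ny23].
have [x10 x1q] := Ufacts G hx1; have [x20 x2q] := Ufacts G hx2.
have [x30 x3q] := Ufacts G hx3.
have [y10 y1q] := Ufacts G hy1; have [y20 y2q] := Ufacts G hy2.
have [y30 y3q] := Ufacts G hy3.
have sub0 (z w : F) : z != w -> z - w != 0 by rewrite subr_eq0.
have p0 : x2 - x3 != 0 by apply: sub0.
have r0 : x2 - x1 != 0 by apply: sub0; rewrite eq_sym.
have p'0 : y2 - y3 != 0 by apply: sub0.
have r'0 : y2 - y1 != 0 by apply: sub0; rewrite eq_sym.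
have x130 : x3 - x1 != 0 by apply: sub0; rewrite eq_sym.
have y130 : y3 - y1 != 0 by apply: sub0; rewrite eq_sym.
set p := x2 - x3; set r := x2 - x1; set p' := y2 - y3; set r' := y2 - y1.
have K t : t ^+ q = t -> r' * t - p' != 0.
  move=> tq; apply/eqP => h.
  have ht : t = p' / r'.
    have -> : p' = r' * t - (r' * t - p') by ring.
    by rewrite h subr0; field.
  move: tq; rewrite ht exprMn exprVn /p' /r' !frobB // y1q y2q y3q => e.
  have : (y2 - y3) * (y1 - y3) / ((y2 - y1) * y3) = 0.
    rewrite -[RHS](subrr ((y2 - y3) / (y2 - y1))) -{1}e; field.
    have -> : y1 + -1 * y2 = y1 - y2 by ring.
    by rewrite r'0 y10 y20 y30 subr_eq0 ny12.
  move/eqP; rewrite !mulf_eq0 invr_eq0 mulf_eq0 (negbTE p'0) (negbTE r'0) (negbTE y30) /=.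
  by rewrite orbF subr_eq0 (negbTE ny13).
exists (r' * y3 * p - p' * y1 * r), (- (r' * y3 * p * x1) + p' * y1 * r * x3),
  (r' * p - p' * r), (- (r' * p * x1) + p' * r * x3).
split; last split.
- split.
    have -> : (r' * y3 * p - p' * y1 * r) * (- (r' * p * x1) + p' * r * x3) -
      (- (r' * y3 * p * x1) + p' * y1 * r * x3) * (r' * p - p' * r) =
      r' * p' * (y1 - y3) * (p * r * (x1 - x3)) by ring.
    rewrite !mulf_neq0 //; rewrite -opprB oppr_eq0 //.
  move=> u uU; have [u0 uq] := Ufacts G uU.
  have [->|ux3] := eqVneq u x3.
    have -> : (r' * p - p' * r) * x3 + (- (r' * p * x1) + p' * r * x3) = r' * p * (x3 - x1) by ring.
    have -> : (r' * y3 * p - p' * y1 * r) * x3 + (- (r' * y3 * p * x1) + p' * y1 * r * x3)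
       = r' * p * (x3 - x1) * y3 by ring.
    split; first by rewrite !mulf_neq0.
    by rewrite [_ * y3]mulrC mulfK ?mulf_neq0.
  have ux30 : u - x3 != 0 by apply: sub0.
  pose t := p * (u - x1) / (r * (u - x3)).
  have tq : t ^+ q = t.
    rewrite /t exprMn exprVn !exprMn /p /r !frobB // x1q x2q x3q uq; field.
    have -> : x3 + -1 * u = - (u - x3) by ring.
    have -> : x1 + -1 * x2 = - (x2 - x1) by ring.
    by rewrite !oppr_eq0 ux30 r0 x10 x20 x30 u0.
  have Y0 := K t tq.
  have -> : (r' * p - p' * r) * u + (- (r' * p * x1) + p' * r * x3) = r * (u - x3) * (r' * t - p').
    by rewrite /t; field; rewrite r0 ux30.
  have -> : (r' * y3 * p - p' * y1 * r) * u + (- (r' * y3 * p * x1) + p' * y1 * r * x3)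
    = r * (u - x3) * (r' * y3 * t - p' * y1).
    by rewrite /t; field; rewrite r0 ux30.
  clearbody t.
  split; first by rewrite !mulf_neq0.
  rewrite -mulf_div divff ?mulf_neq0 // mul1r.
  set X := r' * y3 * t - p' * y1; set Y := r' * t - p'.
  have Xq : X ^+ q = (y2^-1 - y1^-1) * y3^-1 * t - (y2^-1 - y3^-1) * y1^-1.
    by rewrite /X frobB // !exprMn tq /r' /p' !frobB // y1q y2q y3q.
  have Yq : Y ^+ q = (y2^-1 - y1^-1) * t - (y2^-1 - y3^-1).
    by rewrite /Y frobB // !exprMn tq /r' /p' !frobB // y1q y2q y3q.
  have XY : X * X ^+ q = Y * Y ^+ q.
    rewrite Xq Yq /X /Y /r' /p'; field.
    by rewrite y10 y20 y30.
  have Yq0 : Y ^+ q != 0 by rewrite expf_neq0.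
  rewrite inE exprS exprMn exprVn mulrACA -invfM XY divff ?mulf_neq0 //.
- have -> : (r' * p - p' * r) * x1 + (- (r' * p * x1) + p' * r * x3) = p' * r * (x3 - x1) by ring.
  have -> : (r' * y3 * p - p' * y1 * r) * x1 + (- (r' * y3 * p * x1) + p' * y1 * r * x3)
     = p' * r * (x3 - x1) * y1 by ring.
  by rewrite [_ * y1]mulrC mulfK ?mulf_neq0.
- have -> : (r' * p - p' * r) * x2 + (- (r' * p * x1) + p' * r * x3) = r * p * (y3 - y1)
    by rewrite /r /p /r' /p'; ring.
  have -> : (r' * y3 * p - p' * y1 * r) * x2 + (- (r' * y3 * p * x1) + p' * y1 * r * x3)
     = r * p * (r' * y3 - p' * y1) by rewrite /r /p; ring.
  rewrite /r' /p'; field; by rewrite r0 p0 y130.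
- have -> : (r' * p - p' * r) * x3 + (- (r' * p * x1) + p' * r * x3) = r' * p * (x3 - x1) by ring.
  have -> : (r' * y3 * p - p' * y1 * r) * x3 + (- (r' * y3 * p * x1) + p' * y1 * r * x3)
     = r' * p * (x3 - x1) * y3 by ring.
  by rewrite [_ * y3]mulrC mulfK ?mulf_neq0.
Qed.

Lemma supp_sub {F : finFieldType} q (a : F * F * F * F) : supp35 q a \subset Uroots F q.
Proof. by apply/subsetP => x; rewrite /supp35 in_set => /andP []. Qed.

Lemma blocks_sub {F : finFieldType} {q k} {B : {set F}} :
  B \in blocks35 F q k -> B \subset Uroots F q.
Proof.
by rewrite /blocks35 in_set => /andP [_ /existsP [a /eqP ->]]; apply: supp_sub.
Qed.

Lemma stab_inj {F : finFieldType} {q} {a b c d : F} : in_stabU q a b c d ->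
  {in Uroots F q &, injective (fun u => (a * u + b) / (c * u + d))}.
Proof.
case=> det hu u v uU vU /= e.
have [Du _] := hu u uU; have [Dv _] := hu v vU.
have : (a * d - b * c) * (u - v) = 0.
  have -> : (a * d - b * c) * (u - v) =
    ((a * u + b) / (c * u + d) - (a * v + b) / (c * v + d)) * ((c * u + d) * (c * v + d)).
    by field; rewrite Du Dv.
  by rewrite e subrr mul0r.
by move/eqP; rewrite mulf_eq0 (negbTE det) /= subr_eq0 => /eqP.
Qed.

Lemma invariance {F : finFieldType} {q} (G : good F q) (hF : #|F| = (q ^ 2)%N) k
  (a b c d : F) : in_stabU q a b c d -> forall B, B \in blocks35 F q k ->
  mobius_img a b c d B \in blocks35 F q k.
Proof.
move=> hS.
set f := fun u => (a * u + b) / (c * u + d).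
set U := Uroots F q; set Bs := blocks35 F q k.
have fU : forall u, u \in U -> f u \in U by move=> u uU; case: (hS) => _ h; case: (h u uU).
have finj : {in U &, injective f} := stab_inj hS.
pose Phi (B : {set F}) := [set u in U | f u \in B].
have Phi_bl : forall B, B \in Bs -> Phi B \in Bs.
  move=> B hB; have sB := blocks_sub hB.
  move: hB; rewrite /Bs /blocks35 in_set => /andP [/eqP hk /existsP [a' /eqP hB]].
  have [a'' ha''] := transform G hF _ _ _ _ hS a'.
  rewrite in_set; apply/andP; split.
    by rewrite /Phi (L_card finj fU sB) hk.
  apply/existsP; exists a''; apply/eqP/setP => u.
  rewrite /Phi /supp35 !in_set hB in_set.
  case: (boolP (u ^+ q.+1 == 1)) => uU //=.
  have uU' : u \in U by rewrite /U /Uroots in_set.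
  by rewrite fU //= ha''.
have Phi_inj : {in Bs &, injective Phi}.
  move=> B1 B2 h1 h2 e.
  rewrite -(L_pre finj fU (blocks_sub h1)) -(L_pre finj fU (blocks_sub h2)).
  by move: e; rewrite /Phi => ->.
have PhiBs : Phi @: Bs = Bs.
  apply/eqP; rewrite eqEcard card_in_imset // leqnn andbT.
  by apply/subsetP => y /imsetP [x xB ->]; exact: Phi_bl.
move=> B hB.
have : B \in Phi @: Bs by rewrite PhiBs.
case/imsetP => B' hB' ->.
have -> : mobius_img a b c d (Phi B') = f @: Phi B' by [].
by rewrite (L_pre finj fU (blocks_sub hB')).
Qed.

Lemma trans3 {F : finFieldType} {q} (G : good F q) (T1 T2 : {set F}) :
  T1 \subset Uroots F q -> #|T1| = 3%N -> T2 \subset Uroots F q -> #|T2| = 3%N ->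
  exists a b c d : F, in_stabU q a b c d /\ mobius_img a b c d T1 = T2.
Proof.
move=> s1 c1 s2 c2.
have [x1 [x2 [x3 [e1 nx]]]] := three_elems T1 c1.
have [y1 [y2 [y3 [e2 ny]]]] := three_elems T2 c2.
have hx : [/\ x1 \in Uroots F q, x2 \in Uroots F q & x3 \in Uroots F q].
  by split; apply: (subsetP s1); rewrite e1 !inE eqxx ?orbT.
have hy : [/\ y1 \in Uroots F q, y2 \in Uroots F q & y3 \in Uroots F q].
  by split; apply: (subsetP s2); rewrite e2 !inE eqxx ?orbT.
have [a [b [c [d [hS [f1 f2 f3]]]]]] := mob3 G _ _ _ _ _ _ hx nx hy ny.
exists a, b, c, d; split => //.
by rewrite /mobius_img e1 e2 !imsetU !imset_set1 f1 f2 f3.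
Qed.

Lemma cnt_le {F : finFieldType} {q} (G : good F q) (hF : #|F| = (q ^ 2)%N) k
  (T1 T2 : {set F}) :
  T1 \subset Uroots F q -> #|T1| = 3%N -> T2 \subset Uroots F q -> #|T2| = 3%N ->
  (#|[set B in blocks35 F q k | T1 \subset B]| <= #|[set B in blocks35 F q k | T2 \subset B]|)%N.
Proof.
move=> s1 c1 s2 c2.
have [a [b [c [d [hS e]]]]] := trans3 G T1 T2 s1 c1 s2 c2.
have finj := stab_inj hS.
pose g := mobius_img a b c d.
rewrite -(@card_in_imset _ _ g).
  apply: subset_leq_card; apply/subsetP => y /imsetP [B]; rewrite in_set => /andP [hB sB] ->.
  rewrite in_set invariance // -e.
  exact: imsetS.
move=> B1 B2 /setIdP [h1 _] /setIdP [h2 _] eg.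
exact: (@L_imginj _ (fun u => (a * u + b) / (c * u + d)) _ _ _ finj (blocks_sub h1) (blocks_sub h2) eg).
Qed.

Theorem theorem23 (F : finFieldType) (m : nat) (hm : (2 <= m)%N)
    (hF : #|F| = ((2 ^ m) ^ 2)%N) (k : nat) (hk : (1 <= k <= (2 ^ m).+1)%N)
    (hex : exists B, B \in blocks35 F (2 ^ m) k) :
  (forall (a b c d : F), in_stabU (2 ^ m) a b c d ->
     forall B, B \in blocks35 F (2 ^ m) k ->
       mobius_img a b c d B \in blocks35 F (2 ^ m) k)
  /\ ((3 < k)%N -> is_3design (Uroots F (2 ^ m)) (blocks35 F (2 ^ m) k)).
Proof.
have G := good_of F m hm hF.
split; first by move=> a b c d hS; exact: (invariance G hF).
move=> k3; split; first by move=> B; exact: blocks_sub.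
case: hex => B0 hB0.
have sB0 := blocks_sub hB0.
have cB0 : #|B0| = k by move: hB0; rewrite in_set => /andP [/eqP].
have [T0 [sT0 cT0]] : exists T0 : {set F}, T0 \subset B0 /\ #|T0| = 3%N.
  by apply: sub3; rewrite cB0 ltnW.
have sT0U : T0 \subset Uroots F (2 ^ m) := subset_trans sT0 sB0.
exists #|[set B in blocks35 F (2 ^ m) k | T0 \subset B]|; split.
  by apply/card_gt0P; exists B0; apply/setIdP.
move=> T sT cT; apply/eqP; rewrite eqn_leq.
by rewrite (cnt_le G hF k T T0) ?(cnt_le G hF k T0 T).
Qed.
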